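(* Let $t\ge 2$, $r\ge 3$ and $k\ge 3$ be fixed integers. Then $\mathrm{ex}_r(n,F_{t,k}^r)=\Theta(n^r)$ if $k>r$, and $\mathrm{ex}_r(n,F_{t,k}^r)=\Theta(n^{r-1})$ if $3\le k\le r$ (as $n\to\infty$).
   Context: $F_{t,k}$ denotes the graph on $(k-1)t+1$ vertices consisting of $t$ copies of the complete graph $K_k$ pairwise sharing exactly one common vertex. For a graph $F$, its $r$-expansion $F^r$ is the $r$-graph obtained from $F$ by adding to each edge of $F$ a set of $r-2$ new vertices, where all $(r-2)|E(F)|$ new vertices are distinct from each other and from $V(F)$; each edge together with its new vertices becomes a hyperedge. $\mathrm{ex}_r(n,\mathcal F)$ denotes the maximum number of hyperedges in an $n$-vertex $r$-graph not containing $\mathcal F$ as a subhypergraph. *)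

(* Defs.v *)
From HB Require Import structures.
From mathcomp Require Import all_boot all_order all_algebra.
Set Implicit Arguments. Unset Strict Implicit. Unset Printing Implicit Defensive.
Import Order.TTheory GRing.Theory Num.Theory.

(* A (hyper)graph on a finite vertex type V is given by its edge set
   E : {set {set V}}.  A simple graph has all edges of size 2;
   an r-graph has all edges of size r. *)

Definition uniform (V : finType) (r : nat) (E : {set {set V}}) : bool :=
  [forall e in E, #|e| == r].

Definition contains (U W : finType) (H : {set {set U}}) (G : {set {set W}}) : bool :=
  [exists f : {ffun W -> U}, injectiveb f && [forall e in G, (f @: e) \in H]].

(* The r-expansion of a graph (V, E): each edge e receives r-2 new vertices
   (inr (e, i)), all distinct from each other and from V. *)
Definition exp_vertex (V : finType) (E : {set {set V}}) (r : nat) : finType :=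
  (V + ({e : {set V} | e \in E} * 'I_(r - 2)))%type.

Definition exp_edge (V : finType) (E : {set {set V}}) (r : nat)
  (s : {e : {set V} | e \in E}) : {set exp_vertex E r} :=
  [set inl v | v in val s] :|: [set inr (s, i) | i : 'I_(r - 2)].

Definition expansion (V : finType) (E : {set {set V}}) (r : nat)
  : {set {set exp_vertex E r}} :=
  [set exp_edge r s | s : {e : {set V} | e \in E}].

(* F_{t,k}: t copies of K_k sharing exactly one common vertex.
   Vertices: None (the common vertex) and Some (i, j), the j-th of the
   k-1 private vertices of copy i.  Total (k-1)t+1 vertices. *)
Definition Ftk_vertex (t k : nat) : finType := option ('I_t * 'I_k.-1).

Definition Ftk_adj (t k : nat) (x y : Ftk_vertex t k) : bool :=
  match x, y with
  | Some (i, _), Some (i', _) => i == i'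
  | _, _ => true
  end.

Definition Ftk (t k : nat) : {set {set Ftk_vertex t k}} :=
  [set e : {set Ftk_vertex t k} |
     [exists x, exists y, [&& x != y, Ftk_adj x y & e == [set x; y]]]].

Definition ex_r (r n : nat) (W : finType) (G : {set {set W}}) : nat :=
  \max_(H : {set {set 'I_n}} | uniform r H && ~~ contains H G) #|H|.

Local Open Scope ring_scope.

Definition bigTheta (f : nat -> nat) (d : nat) : Prop :=
  exists (c1 c2 : rat) (N : nat), 0 < c1 /\ 0 < c2 /\
    forall n : nat, (N <= n)%N ->
      c1 * (n%:R ^+ d) <= (f n)%:R /\ (f n)%:R <= c2 * (n%:R ^+ d).

(* Main.v *)
Require Import Defs.
From HB Require Import structures.
From mathcomp Require Import all_boot all_order all_algebra.
From mathcomp Require Import zify.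
Set Implicit Arguments. Unset Strict Implicit. Unset Printing Implicit Defensive.


Definition codeg (T : finType) (H : {set {set T}}) (S : {set T}) :=
  #|[set f in H | S \subset f]|.
Definition goodP (T : finType) m (H : {set {set T}}) :=
  [forall e in H, forall y in e, m <= codeg H (e :\ y)].
Definition shadow (T : finType) s (H : {set {set T}}) :=
  [set S : {set T} | (#|S| == s) && [exists e in H, S \subset e]].

Lemma deletion (T : finType) s m (H : {set {set T}}) :
  uniform s.+1 H -> m * #|shadow s H| < #|H| ->
  exists2 H' : {set {set T}}, H' \subset H & (H' != set0) && goodP m H'.
Proof.
move: {2}#|H| (leqnn #|H|) => N; elim: N H => [|N IH] H HN Hu Hlt.
  by move: Hlt; rewrite leqn0 in HN; rewrite (eqP HN).
have [Hg|] := boolP (goodP m H).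
  exists H => //; rewrite Hg andbT; apply/set0Pn.
  by apply/card_gt0P; apply: leq_ltn_trans Hlt.
rewrite /goodP negb_forall_in => /existsP [e /andP [eH]].
rewrite negb_forall_in => /existsP [y /andP [ye]]; rewrite -ltnNge => Hc.
set S := e :\ y in Hc.
set C := [set f in H | S \subset f].
set H1 := H :\: C.
have CH : C \subset H by apply/subsetP => f; rewrite inE => /andP [].
have eC : e \in C by rewrite inE eH subsetDl.
have cardH1 : #|H1| + #|C| = #|H|.
  by rewrite /H1 cardsD (setIidPr CH) subnK // subset_leq_card.
have Hu1 : uniform s.+1 H1.
  apply/forall_inP => f; rewrite inE => /andP [_ fH]; exact: (forall_inP Hu).
have Sshad : S \in shadow s H.
  rewrite inE; apply/andP; split.
    have := forall_inP Hu e eH; rewrite (cardsD1 y e) ye add1n eqSS //.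
  by apply/existsP; exists e; rewrite eH subsetDl.
have shsub : shadow s H1 \subset shadow s H :\ S.
  apply/subsetP => X; rewrite !inE => /andP [-> /existsP [f /andP [fH1 Xf]]].
  move: fH1; rewrite inE => /andP [fC fH].
  apply/andP; split; last by apply/existsP; exists f; rewrite fH.
  apply/eqP => XS; move: fC; rewrite inE fH -XS Xf //.
have sh1 : #|shadow s H1| < #|shadow s H|.
  apply: (leq_ltn_trans (subset_leq_card shsub)).
  by rewrite (cardsD1 S (shadow s H)) Sshad.
have C0 : 0 < #|C| by apply/card_gt0P; exists e.
have HcC : #|C| < m by [].
have [H' H'sub H'g] := IH H1 ltac:(lia) Hu1 ltac:(nia).
exists H' => //; apply: subset_trans H'sub _; exact: subsetDl.
Qed.

Lemma extend (T : finType) s m (H : {set {set T}}) (U A e : {set T}) :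
  uniform s.+1 H -> goodP m H -> e \in H -> A \subset e -> #|U| < m ->
  exists2 f, f \in H & (A \subset f) && [disjoint (f :\: A) & U].
Proof.
move=> Hu Hg.
move: {2}#|(e :\: A) :&: U| (leqnn #|(e :\: A) :&: U|) => N.
elim: N e => [|N IH] e HN eH Ae Um.
  exists e => //; rewrite Ae /= -setI_eq0 -cards_eq0; by rewrite leqn0 in HN.
have [/eqP I0|] := boolP (#|(e :\: A) :&: U| == 0).
  by exists e => //; rewrite Ae /= -setI_eq0 -cards_eq0 I0.
rewrite -lt0n => /card_gt0P [y]; rewrite !inE => /andP [/andP [yA ye] yU].
set S := e :\ y.
have cS : #|S| = s.
  have := forall_inP Hu e eH; rewrite (cardsD1 y e) ye add1n eqSS => /eqP //.
have cod : m <= #|[set f in H | S \subset f]|.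
  exact: (forall_inP (forall_inP Hg e eH) y ye).
have [f fC fdis] : exists2 f, f \in [set f in H | S \subset f] & [disjoint (f :\: S) & U].
  apply/exists_inP; rewrite -[X in is_true X]negbK negb_exists_in; apply/negP => /forall_inP Hall.
  have sub : [set f in H | S \subset f] \subset [set S :|: [set z] | z in U].
    apply/subsetP => f fC; have := Hall f fC; rewrite -setI_eq0 => /set0Pn [z].
    rewrite !inE => /andP [/andP [zS zf] zU].
    apply/imsetP; exists z => //.
    move: fC; rewrite inE => /andP [fH Sf].
    apply/eqP; rewrite eq_sym eqEcard; apply/andP; split.
      by rewrite subUset Sf sub1set.
    have zS' : (z \in S) = false by apply/negbTE; rewrite /S !inE.
    rewrite setUC cardsU1 zS' cS add1n.
    by have := forall_inP Hu f fH => /eqP ->.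
  have := leq_trans (subset_leq_card sub) (leq_imset_card _ _).
  move=> h; have := leq_trans cod h; rewrite leqNgt Um //.
move: fC; rewrite inE => /andP [fH Sf].
have Af : A \subset f.
  apply: subset_trans Sf; apply/subsetP => x xA; rewrite !inE (subsetP Ae x xA) andbT.
  by apply/eqP => xy; move: yA; rewrite -xy xA.
have sub2 : (f :\: A) :&: U \subset ((e :\: A) :&: U) :\ y.
  apply/subsetP => x; rewrite !inE => /andP [/andP [xA xf] xU].
  rewrite xA xU /= !andbT.
  have [xS|xS] := boolP (x \in S).
    by move: xS; rewrite !inE => /andP [-> ->].
  move: fdis; rewrite -setI_eq0 => /eqP fd.
  have : x \in (f :\: S) :&: U by rewrite inE xU andbT inE xf andbT.
  by rewrite fd inE.
have lt : #|(f :\: A) :&: U| <= N.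
  have h := subset_leq_card sub2.
  have cD := cardsD1 y ((e :\: A) :&: U).
  have yin : y \in (e :\: A) :&: U by rewrite !inE yA ye yU.
  rewrite yin in cD; lia.
exact: IH lt fH Af Um.
Qed.

Lemma card_bigcup_le (T I : finType) (D : {set I}) (F : I -> {set T}) :
  #|\bigcup_(j in D) F j| <= \sum_(j in D) #|F j|.
Proof.
elim/big_rec2: _ => [|j n X _ h]; first by rewrite cards0.
by rewrite (leq_trans (leq_card_setU _ _)) ?leq_add2l.
Qed.

Lemma multi_ext (T I : finType) s m (H : {set {set T}}) (U : {set T})
    (A : I -> {set T}) :
  uniform s.+1 H -> goodP m H ->
  (forall i, exists2 e, e \in H & A i \subset e) ->
  #|U| + s.+1 * #|I| < m ->
  exists g : I -> {set T},
    (forall i, [/\ g i \in H, A i \subset g i & [disjoint (g i :\: A i) & U]]) /\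
    (forall i j, i != j -> [disjoint (g i :\: A i) & (g j :\: A j)]).
Proof.
move=> Hu Hg HA Hm.
suff: forall D : {set I}, exists g : I -> {set T},
    (forall i, i \in D -> [/\ g i \in H, A i \subset g i & [disjoint (g i :\: A i) & U]]) /\
    (forall i j, i \in D -> j \in D -> i != j -> [disjoint (g i :\: A i) & (g j :\: A j)]).
  move=> /(_ setT) [g [g1 g2]]; exists g; split => [i|i j]; first exact: g1.
  exact: g2.
move=> D; move: {2}#|D| (leqnn #|D|) => N; elim: N D => [|N IH] D HD.
  exists (fun=> set0); split => [i|i j]; by rewrite leqn0 cards_eq0 in HD; rewrite (eqP HD) inE.
have [/eqP D0|] := boolP (D == set0).
  by exists (fun=> set0); split => [i|i j]; rewrite D0 inE.
case/set0Pn => i0 i0D.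
set D' := D :\ i0.
have cD : #|D'| <= N by have := cardsD1 i0 D; rewrite i0D /= -/D'; lia.
have [g' [g1 g2]] := IH D' cD.
set U' := U :|: \bigcup_(j in D') g' j.
have cU' : #|U'| < m.
  apply: leq_ltn_trans Hm; apply: leq_trans (leq_card_setU _ _) _; rewrite leq_add2l.
  apply: leq_trans (card_bigcup_le _ _) _.
  rewrite (eq_bigr (fun _ => s.+1)) ?sum_nat_const => [|j jD].
    by rewrite mulnC leq_pmul2l // max_card.
  have [gH _ _] := g1 j jD; by have := forall_inP Hu _ gH => /eqP ->.
have [e eH Ae] := HA i0.
have [f fH /andP [Af fdis]] := @extend _ _ _ _ U' _ _ Hu Hg eH Ae cU'.
exists (fun i => if i == i0 then f else g' i); split.
  move=> i iD; have [->|ni] := eqVneq i i0.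
    split => //; apply: disjointWr fdis; exact: subsetUl.
  have iD' : i \in D' by rewrite !inE ni.
  exact: g1.
have key : forall j, j \in D' -> [disjoint (f :\: A i0) & (g' j :\: A j)].
  move=> j jD; apply: disjointWr fdis; apply: subset_trans (subsetDl _ _) _.
  apply: subset_trans (subsetUr U _); exact: bigcup_sup.
move=> i j iD jD; have [->|ni] := eqVneq i i0; have [->|nj] := eqVneq j i0 => //.
- by move=> _; apply: key; rewrite !inE nj.
- by move=> _; rewrite disjoint_sym; apply: key; rewrite !inE ni.
- by apply: g2; rewrite !inE ?ni ?nj.
Qed.

Lemma nth_enum_in (T : finType) (S : {set T}) x0 j :
  j < #|S| -> nth x0 (enum S) j \in S.
Proof. by move=> h; rewrite -mem_enum mem_nth // -cardE. Qed.

Lemma nth_enum_inj (T : finType) (S : {set T}) x0 j l :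
  j < #|S| -> l < #|S| -> nth x0 (enum S) j = nth x0 (enum S) l -> j = l.
Proof.
move=> hj hl /eqP; rewrite nth_uniq ?enum_uniq -?cardE //; by move/eqP.
Qed.

Lemma nth_enum_imset (T : finType) p (S : {set T}) x0 :
  #|S| = p -> [set nth x0 (enum S) (val i) | i : 'I_p] = S.
Proof.
move=> hp; apply/setP => z; apply/idP/idP.
  move=> /imsetP [i _ ->]; apply: nth_enum_in; case: i => /= i; by rewrite hp.
move=> zS; apply/imsetP; have hi : index z (enum S) < p by rewrite -hp cardE index_mem mem_enum.
by exists (Ordinal hi) => //=; rewrite nth_index // mem_enum.
Qed.

Definition Mbound t k s :=
  (s.+1 * (t + #|Ftk t k|) + #|Ftk_vertex t k|).+1.

Lemma embed (T : finType) t k s (H : {set {set T}}) :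
  2 <= s -> 2 <= k -> k <= s.+1 ->
  uniform s.+1 H -> goodP (Mbound t k s) H -> H != set0 ->
  contains H (expansion (Ftk t k) s.+1).
Proof.
move=> s2 k2 ks Hu Hg /set0Pn [e0 e0H].
have : 0 < #|e0| by have := forall_inP Hu e0 e0H => /eqP ->.
case/card_gt0P => v0 v0e.
have HA : forall i : 'I_t, exists2 e, e \in H & [set v0] \subset e.
  by move=> i; exists e0; rewrite ?sub1set.
have [E [E1 E2]] := @multi_ext T 'I_t s (Mbound t k s) H set0 (fun _ => [set v0]) Hu Hg HA
  ltac:(rewrite cards0 card_ord /Mbound; nia).
have cardE : forall i, #|E i :\ v0| = s.
  move=> i; have [Ei v0i _] := E1 i; rewrite sub1set in v0i.
  have := cardsD1 v0 (E i); rewrite v0i; have := forall_inP Hu _ Ei => /eqP ->; lia.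
pose c (v : Ftk_vertex t k) : T :=
  match v with None => v0 | Some (i, j) => nth v0 (enum (E i :\ v0)) j end.
have cS : forall i j, c (Some (i, j)) \in E i :\ v0.
  move=> i j /=; apply: nth_enum_in; rewrite cardE; have := ltn_ord j; lia.
have cinj : injective c.
  have nv0 : forall i j, c (Some (i, j)) != v0.
    by move=> i j; have := cS i j; rewrite !inE => /andP [].
  case=> [[i j]|] [[i' j']|] //=.
  - move=> h; have [ii|ni] := eqVneq i i'.
      subst i'; congr (Some (_, _)); apply: val_inj; apply: nth_enum_inj h;
        rewrite cardE; [have := ltn_ord j|have := ltn_ord j']; lia.
    have := E2 _ _ ni; rewrite -setI_eq0 => /eqP d.
    have : c (Some (i, j)) \in (E i :\ v0) :&: (E i' :\ v0) by rewrite inE cS /= h cS.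
    by rewrite d inE.
  - by move=> h; have := nv0 i j; rewrite /= h eqxx.
  - by move=> h; have := nv0 i' j'; rewrite /= -h eqxx.
pose I2 := {e : {set Ftk_vertex t k} | e \in Ftk t k}.
have adjx : forall x : I2, exists a, exists b, [/\ a != b, Ftk_adj a b & val x = [set a; b]].
  move=> x; have := valP x; rewrite inE => /existsP [a /existsP [b /and3P [ab adj /eqP ->]]].
  by exists a, b.
have cA2 : forall x : I2, #|c @: val x| = 2.
  move=> x; have [a [b [ab _ ->]]] := adjx x.
  by rewrite (card_imset _ cinj) cards2 ab.
have EiH : forall i, E i \in H by move=> i; have [] := E1 i.
have v0E : forall i, v0 \in E i by move=> i; have [_ h _] := E1 i; rewrite sub1set in h.
have cSE : forall i j, c (Some (i, j)) \in E i.
  by move=> i j; have := cS i j; rewrite inE => /andP [].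
have HA2 : forall x : I2, exists2 e, e \in H & c @: val x \subset e.
  move=> x; have [a [b [ab adj ->]]] := adjx x.
  rewrite imsetU1 imset_set1.
  case: a b ab adj => [[i j]|] [[i' j']|] //= ab adj.
  - exists (E i) => //; rewrite subUset !sub1set cSE /=.
    by rewrite (eqP adj) cSE.
  - by exists (E i) => //; rewrite subUset !sub1set cSE v0E.
  - by exists (E i') => //; rewrite subUset !sub1set cSE v0E.
have bnd : #|c @: setT| + s.+1 * #|{: I2}| < Mbound t k s.
  rewrite /Mbound card_sig.
  have h1 := leq_imset_card c [set: Ftk_vertex t k]; rewrite cardsT in h1.
  have h2 : #|[pred x in Ftk t k]| = #|Ftk t k| by apply: eq_card.
  rewrite h2; nia.
have [g [g1 g2]] := @multi_ext T I2 s (Mbound t k s) H (c @: setT) (fun x : I2 => c @: val x) Hu Hg HA2 bnd.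
have cardG : forall x : I2, #|g x :\: c @: val x| = s.+1 - 2.
  move=> x; have [gx sub _] := g1 x; rewrite cardsDS // cA2.
  by have := forall_inP Hu _ gx => /eqP ->.
pose Ff (v : (Ftk_vertex t k + (I2 * 'I_(s.+1 - 2)))%type) : T :=
  match v with inl a => c a | inr p => nth v0 (enum (g p.1 :\: c @: val p.1)) (val p.2) end.
pose F : {ffun exp_vertex (Ftk t k) s.+1 -> T} := [ffun v => Ff v].
have Fin : forall (x : I2) (j : 'I_(s.+1 - 2)), F (inr (x, j) : exp_vertex (Ftk t k) s.+1) \in g x :\: c @: val x.
  by move=> x j; rewrite ffunE /=; apply: nth_enum_in; rewrite cardG.
apply/existsP; exists F; apply/andP; split.
  apply/injectiveP; case=> [a|[x j]] [b|[y l]]; rewrite ?ffunE /=.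
  - by move/cinj ->.
  - move=> h; have [_ _ d] := g1 y; have := Fin y l; rewrite ffunE /= -h => hin.
    have : c a \in (g y :\: c @: val y) :&: (c @: setT) by rewrite inE hin imset_f.
    by move: d; rewrite -setI_eq0 => /eqP ->; rewrite inE.
  - move=> h; have [_ _ d] := g1 x; have := Fin x j; rewrite ffunE /= h => hin.
    have : c b \in (g x :\: c @: val x) :&: (c @: setT) by rewrite inE hin imset_f.
    by move: d; rewrite -setI_eq0 => /eqP ->; rewrite inE.
  - move=> h; have [xy|nxy] := eqVneq x y.
      subst y; congr (inr (_, _)); apply: val_inj; apply: nth_enum_inj h;
        rewrite cardG ltn_ord //.
    have := g2 _ _ nxy; rewrite -setI_eq0 => /eqP d.
    have := Fin x j; have := Fin y l; rewrite !ffunE /= -h => h1 h2.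
    have : nth v0 (enum (g x :\: c @: val x)) j \in
       (g x :\: c @: val x) :&: (g y :\: c @: val y) by rewrite inE h1 h2.
    by rewrite d inE.
apply/forall_inP => e /imsetP [x _ ->].
rewrite /exp_edge imsetU -!imset_comp.
have -> : [set (F \o inl) v | v in val x] = c @: val x.
  by apply: eq_imset => v; rewrite /= ffunE.
have -> : [set (F \o (fun i => inr (x, i))) i | i : 'I_(s.+1 - 2)] = g x :\: c @: val x.
  rewrite -[RHS](nth_enum_imset v0 (cardG x)); apply: eq_imset => i; by rewrite /= ffunE.
have [gx sub _] := g1 x.
by rewrite -{1}(setIidPr sub) setID.
Qed.

Lemma divmod_uniq p u u' j j' : j < p -> j' < p ->
  u * p + j = u' * p + j' -> u = u' /\ j = j'.
Proof.
move=> hj hj' e.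
have ej : j = j'.
  by have := congr1 (modn^~ p) e; rewrite !modnMDl !modn_small.
split => //; subst j'; move/eqP: e; rewrite eqn_add2r eqn_mul2r.
by case/orP => [/eqP p0|/eqP //]; move: hj; rewrite p0.
Qed.

Definition trans n p off q (a : {ffun 'I_p -> 'I_q}) : {set 'I_n} :=
  [set x : 'I_n | [exists j : 'I_p, val x == off + (a j * p + j)]].

Lemma trans_res n p off q (a : {ffun 'I_p -> 'I_q}) (x y : 'I_n) :
  x \in trans n off a -> y \in trans n off a -> (x - off) %% p = (y - off) %% p -> x = y.
Proof.
rewrite !inE => /existsP [j /eqP hx] /existsP [l /eqP hy].
rewrite hx hy !addKn !modnMDl !modn_small // => /val_inj ejl.
by subst l; apply: val_inj; rewrite hx hy.
Qed.

Lemma trans_card n p off q (a : {ffun 'I_p -> 'I_q}) :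
  off + q * p <= n -> #|trans n off a| = p.
Proof.
move=> hn.
have hlt : forall j : 'I_p, off + (a j * p + j) < n.
  move=> j; have := ltn_ord (a j); have := ltn_ord j => h1 h2.
  apply: leq_trans hn; rewrite -addnS leq_add2l.
  apply: leq_trans (_ : (a j).+1 * p <= q * p); first by rewrite mulSn addnC; lia.
  by nia.
pose h j := Ordinal (hlt j).
have -> : trans n off a = h @: setT.
  apply/setP => x; rewrite inE; apply/existsP/imsetP => [[j /eqP hj]|[j _ ->]].
    by exists j => //; apply: val_inj.
  by exists j.
rewrite card_imset ?cardsT ?card_ord // => j l /(congr1 val) /= /eqP.
rewrite eqn_add2l => /eqP e.
by have [_ /val_inj] := divmod_uniq (ltn_ord j) (ltn_ord l) e.
Qed.

Lemma trans_inj n p off q : off + q * p <= n ->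
  injective (@trans n p off q).
Proof.
move=> hn a b e; apply/ffunP => j.
have hlt : off + (a j * p + j) < n.
  have := ltn_ord (a j); have := ltn_ord j => h1 h2.
  apply: leq_trans hn; rewrite -addnS leq_add2l.
  apply: leq_trans (_ : (a j).+1 * p <= q * p); first by rewrite mulSn addnC; lia.
  by nia.
have : Ordinal hlt \in trans n off a by rewrite inE; apply/existsP; exists j.
rewrite e inE => /existsP [l /eqP /= /eqP]; rewrite eqn_add2l => /eqP el.
have [eu ejl] := divmod_uniq (ltn_ord j) (ltn_ord l) el.
move/val_inj: ejl => ejl; subst l; exact: val_inj.
Qed.

Lemma Ftk_pair t k (a b : Ftk_vertex t k) :
  a != b -> Ftk_adj a b -> [set a; b] \in Ftk t k.
Proof.
move=> ab adj; rewrite inE; apply/existsP; exists a; apply/existsP; exists b.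
by rewrite ab adj eqxx.
Qed.

Lemma star_free (T : finType) t k r (H : {set {set T}}) (z0 : T) :
  (forall e, e \in H -> z0 \in e) -> 2 <= t -> 3 <= k ->
  ~~ contains H (expansion (Ftk t k) r).
Proof.
move=> Hz t2 k3; apply/negP => /existsP [F /andP [/injectiveP Finj /forall_inP HF]].
have t0 : 0 < t by lia.
have t1 : 1 < t by lia.
have k0 : 0 < k.-1 by lia.
have k1 : 1 < k.-1 by lia.
pose a1 : Ftk_vertex t k := Some (Ordinal t0, Ordinal k0).
pose b1 : Ftk_vertex t k := Some (Ordinal t0, Ordinal k1).
pose a2 : Ftk_vertex t k := Some (Ordinal t1, Ordinal k0).
pose b2 : Ftk_vertex t k := Some (Ordinal t1, Ordinal k1).
have p1 : [set a1; b1] \in Ftk t k by apply: Ftk_pair.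
have p2 : [set a2; b2] \in Ftk t k by apply: Ftk_pair.
pose x1 : {e : {set Ftk_vertex t k} | e \in Ftk t k} := exist (fun e => e \in Ftk t k) _ p1.
pose x2 : {e : {set Ftk_vertex t k} | e \in Ftk t k} := exist (fun e => e \in Ftk t k) _ p2.
have m1 : exp_edge r x1 \in expansion (Ftk t k) r by apply/imsetP; exists x1.
have m2 : exp_edge r x2 \in expansion (Ftk t k) r by apply/imsetP; exists x2.
have h1 := Hz _ (HF _ m1).
have h2 := Hz _ (HF _ m2).
case/imsetP: h1 => u1 u1e e1; case/imsetP: h2 => u2 u2e e2.
have eu : u1 = u2 by apply: Finj; rewrite -e1 -e2.
subst u2; move: u1e u2e; rewrite /exp_edge !inE.
case/orP => /imsetP [w w1 ->]; case/orP => /imsetP [w' w2] //.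
- move=> [ww']; subst w'; move: w1 w2; rewrite /x1 /x2 /= !inE.
  by case/orP => /eqP ->; case/orP => /eqP.
- move=> [ex _]; have := ex => /setP hh; have := hh a1; rewrite !inE eqxx /=.
  by rewrite /a1 /a2 /b2.
Qed.

Lemma part_free (T : finType) t k r (H : {set {set T}}) (rho : T -> 'I_r) :
  (forall e, e \in H -> {in e &, injective rho}) -> 1 <= t -> r < k ->
  ~~ contains H (expansion (Ftk t k) r).
Proof.
move=> Hr t1 rk; apply/negP => /existsP [F /andP [/injectiveP Finj /forall_inP HF]].
pose i0 : 'I_t := Ordinal t1.
pose K0 : {set Ftk_vertex t k} := None |: [set Some (i0, j) | j : 'I_k.-1].
have cK0 : #|K0| = k.
  rewrite cardsU1 card_imset ?card_ord; last by move=> j l [].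
  have -> : (None \notin [set Some (i0, j) | j : 'I_k.-1]) by apply/imsetP => [[j _]].
  lia.
pose sig v := rho (F (inl v)).
have adjK : forall u w, u \in K0 -> w \in K0 -> Ftk_adj u w.
  move=> u w; rewrite !inE => /orP [/eqP ->|/imsetP [j _ ->]] //.
  by case/orP => [/eqP ->|/imsetP [l _ ->]] //=.
have inj : {in K0 &, injective sig}.
  move=> u w uK wK e; apply/eqP; apply/negP => /negP ne.
  have px := Ftk_pair ne (adjK _ _ uK wK).
  pose x : {e : {set Ftk_vertex t k} | e \in Ftk t k} := exist (fun e => e \in Ftk t k) _ px.
  have mx : exp_edge r x \in expansion (Ftk t k) r by apply/imsetP; exists x.
  have hx := Hr _ (HF _ mx).
  have iu : F (inl u) \in F @: exp_edge r x.
    by apply: imset_f; rewrite /exp_edge !inE; apply/orP; left; apply: imset_f; rewrite /= !inE eqxx.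
  have iw : F (inl w) \in F @: exp_edge r x.
    by apply: imset_f; rewrite /exp_edge !inE; apply/orP; left; apply: imset_f; rewrite /= !inE eqxx orbT.
  have := hx _ _ iu iw e => /Finj [] euw.
  by move: ne; rewrite euw eqxx.
have := max_card (mem (sig @: K0)); rewrite (card_in_imset inj) cK0 card_ord; lia.
Qed.

Lemma expn_mono m n e : m <= n -> m ^ e <= n ^ e.
Proof. by move=> h; elim: e => // e IH; rewrite !expnS leq_mul. Qed.

Lemma bin_le_exp n s : 'C(n, s) <= n ^ s.
Proof.
elim: n s => [|n IH] [|s] //.
rewrite binS; have h1 := IH s.+1; have h2 := IH s.
have h3 : n ^ s <= n.+1 ^ s by apply: expn_mono.
rewrite expnS in h1; rewrite expnS; nia.
Qed.

Lemma ex_r_ub r n (W : finType) (G : {set {set W}}) B :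
  (forall H : {set {set 'I_n}}, uniform r H -> ~~ contains H G -> #|H| <= B) ->
  ex_r r n G <= B.
Proof. by move=> h; apply/bigmax_leqP => H /andP [u c]; apply: h. Qed.

Lemma ex_r_lb r n (W : finType) (G : {set {set W}}) (H : {set {set 'I_n}}) :
  uniform r H -> ~~ contains H G -> #|H| <= ex_r r n G.
Proof. by move=> u c; rewrite /ex_r; apply: (leq_bigmax_cond H); rewrite u c. Qed.

Lemma uniform_card r n (H : {set {set 'I_n}}) : uniform r H -> #|H| <= 'C(n, r).
Proof.
move=> u; have := card_draws 'I_n r; rewrite card_ord => <-; apply: subset_leq_card.
apply/subsetP => e eH; rewrite inE; exact: (forall_inP u).
Qed.

Lemma contains_mono (U W : finType) (H H' : {set {set U}}) (G : {set {set W}}) :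
  H' \subset H -> contains H' G -> contains H G.
Proof.
move=> sub /existsP [f /andP [fi /forall_inP fe]]; apply/existsP; exists f.
rewrite fi /=; apply/forall_inP => e eG; exact: (subsetP sub _ (fe e eG)).
Qed.

Lemma upper_small t k s n (H : {set {set 'I_n}}) :
  2 <= s -> 2 <= k -> k <= s.+1 -> uniform s.+1 H ->
  ~~ contains H (expansion (Ftk t k) s.+1) -> #|H| <= Mbound t k s * 'C(n, s).
Proof.
move=> s2 k2 ks u nc; rewrite leqNgt; apply/negP => big.
have hsh : #|shadow s H| <= 'C(n, s).
  have := card_draws 'I_n s; rewrite card_ord => <-; apply: subset_leq_card.
  by apply/subsetP => S; rewrite !inE => /andP [].
have [H' sub /andP [ne g]] := @deletion _ s (Mbound t k s) H u
  (leq_ltn_trans (leq_mul (leqnn _) hsh) big).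
have u' : uniform s.+1 H'.
  by apply/forall_inP => e eH; apply: (forall_inP u); apply: (subsetP sub).
by move: nc; rewrite (contains_mono sub (embed s2 k2 ks u' g ne)).
Qed.

Lemma lower_part t k r n : 1 <= t -> r < k -> 0 < r ->
  (n %/ r) ^ r <= ex_r r n (expansion (Ftk t k) r).
Proof.
move=> t1 rk r0; set q := n %/ r.
have hn : 0 + q * r <= n by rewrite add0n leq_trunc_div.
pose Hp := [set trans n 0 a | a : {ffun 'I_r -> 'I_q}].
have cH : #|Hp| = q ^ r.
  by rewrite card_imset ?card_ffun ?card_ord //; exact: trans_inj hn.
have u : uniform r Hp by apply/forall_inP => e /imsetP [a _ ->]; rewrite trans_card.
rewrite -cH; apply: ex_r_lb u _.
apply: (@part_free _ t k r Hp (fun x : 'I_n => Ordinal (ltn_pmod x r0))) => //.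
move=> e /imsetP [a _ ->] x y hx hy [exy]; have := trans_res hx hy; rewrite !subn0; exact.
Qed.

Lemma lower_star t k s n : 2 <= t -> 3 <= k -> 0 < s -> 0 < n ->
  (n.-1 %/ s) ^ s <= ex_r s.+1 n (expansion (Ftk t k) s.+1).
Proof.
move=> t2 k3 s0 n0; set q := n.-1 %/ s.
have hn : 1 + q * s <= n.
  have := leq_trunc_div n.-1 s; rewrite -/q; lia.
pose z0 : 'I_n := Ordinal n0.
have z0n : forall a : {ffun 'I_s -> 'I_q}, z0 \notin trans n 1 a.
  by move=> a; rewrite inE; apply/existsP => [[j /eqP]].
pose Hs := [set z0 |: trans n 1 a | a : {ffun 'I_s -> 'I_q}].
have cH : #|Hs| = q ^ s.
  rewrite card_imset ?card_ffun ?card_ord // => a b e.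
  apply: (trans_inj hn); by rewrite -(setU1K (z0n a)) -(setU1K (z0n b)) e.
have u : uniform s.+1 Hs.
  by apply/forall_inP => e /imsetP [a _ ->]; rewrite cardsU1 (negPf (z0n a)) trans_card.
rewrite -cH; apply: ex_r_lb u _.
apply: (@star_free _ t k s.+1 Hs z0) => // e /imsetP [a _ ->]; exact: setU11.
Qed.

Import Order.TTheory GRing.Theory Num.Theory.

Lemma theta_nat (f : nat -> nat) d A B N : 0 < A -> 0 < B ->
  (forall n, N <= n -> n ^ d <= A * f n /\ f n <= B * n ^ d) -> bigTheta f d.
Proof.
move=> A0 B0 h; exists (A%:R^-1)%R, (B%:R)%R, N; split; first by rewrite invr_gt0 ltr0n.
split; first by rewrite ltr0n.
move=> n /h [h1 h2]; split.
  have A0' : (0 < (A%:R : rat))%R by rewrite ltr0n.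
  rewrite -(ler_pM2l A0') mulrA divff ?mul1r ?lt0r_neq0 //.
  by rewrite -natrX -natrM ler_nat.
by rewrite -natrX -natrM ler_nat.
Qed.

Lemma three_bound n p : 0 < p -> p <= n -> n.+1 <= 3 * p * (n %/ p).
Proof.
move=> p0 pn; have e := divn_eq n p; have m := ltn_pmod n p0.
set q := n %/ p in e *; set rm := n %% p in e m.
have q1 : 0 < q by rewrite /q divn_gt0.
nia.
Qed.

Unset Implicit Arguments.

Theorem proposition2 (t r k : nat) :
  (2 <= t)%N -> (3 <= r)%N -> (3 <= k)%N ->
  ((r < k)%N -> bigTheta (fun n => ex_r r n (expansion (Ftk t k) r)) r) /\
  ((k <= r)%N -> bigTheta (fun n => ex_r r n (expansion (Ftk t k) r)) r.-1).
Proof.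
move=> t2 r3 k3; split => hk.
  apply: (@theta_nat _ r ((3 * r) ^ r) 1 r) => //; first by rewrite expn_gt0; lia.
  move=> n rn; split.
    apply: leq_trans (_ : (3 * r) ^ r * (n %/ r) ^ r <= _).
      rewrite -expnMn; apply: expn_mono; have := three_bound (_ : 0 < r) rn; lia.
    by rewrite leq_mul2l lower_part ?orbT //; lia.
  rewrite mul1n; apply: leq_trans (bin_le_exp n r).
  by apply: ex_r_ub => H u _; apply: uniform_card.
case: r r3 hk => [|s] r3 hk //=.
apply: (@theta_nat _ s ((3 * s) ^ s) (Mbound t k s) s.+1) => //.
- by rewrite expn_gt0; lia.
- move=> n sn; split.
    apply: leq_trans (_ : (3 * s) ^ s * (n.-1 %/ s) ^ s <= _).
      rewrite -expnMn; apply: expn_mono.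
      have := three_bound (_ : 0 < s) (_ : s <= n.-1); lia.
    by rewrite leq_mul2l lower_star ?orbT //; lia.
  apply: ex_r_ub => H u nc; apply: leq_trans (upper_small _ _ _ u nc) _; try lia.
  by rewrite leq_mul2l bin_le_exp orbT.
Qed.
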